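(* Let $\mathcal{A}$ be a finite alphabet and let $\Sigma$ be the set of standard pairs on $\mathcal{A}$ whose rows have the form $a\,w_0\,w_1\,w_2\cdots w_{d-1}\,w_d\,w_{d+1}\,z$ (row 0) and $z\,w_0\,w_d\,w_{d-1}\cdots w_2\,w_1\,w_{d+1}\,a$ (row 1) for some $d\ge0$, letters $a,z$, and words $w_0,\dots,w_{d+1}$ where $w_0$ and $w_{d+1}$ may be empty and $w_1,\dots,w_d$ are nonempty (each $w_i$ appearing identically, not reversed, in both rows). Then $\Sigma$ is closed under inner switch moves and outer switch moves (whenever the move is defined). Moreover, if some $\mathbf{p}\in\Sigma$ has a Type, then it is of Type $\langle1\rangle$.
   Context: Let $n=\#\mathcal{A}\ge2$. A pair is $\mathbf{p}=(p_0,p_1)$ with $p_0,p_1:\mathcal{A}\to\{1,\dots,n\}$ bijections, displayed by rows (row $\varepsilon$ lists $p_\varepsilon^{-1}(1),\dots,p_\varepsilon^{-1}(n)$); words are ordered collections of distinct letters. Standard: $p_0^{-1}(1)=p_1^{-1}(n)$ and $p_1^{-1}(1)=p_0^{-1}(n)$. Inner switch: for standard $\mathbf{p}$ with rows $a\,u_1\,b\,u_2\,c\,u_3\,z$ and $z\,u_4\,b\,u_5\,c\,u_6\,a$ (letters $b,c$, possibly empty words $u_i$), the $\{b,c\}$-switch gives rows $a\,u_2\,c\,u_1\,b\,u_3\,z$ and $z\,u_5\,c\,u_4\,b\,u_6\,a$. Outer switches: for standard $\mathbf{p}$ with rows $a\,u_1\,b\,u_2\,z$ and $z\,u_3\,b\,u_4\,a$,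 the $\{a,b\}$-switch gives rows $b\,u_2\,a\,u_1\,z$ and $z\,u_4\,a\,u_3\,b$, and the $\{b,z\}$-switch gives rows $a\,u_2\,z\,u_1\,b$ and $b\,u_4\,z\,u_3\,a$. A standard pair is piece-wise order reversing if there are $2=k_0<\dots<k_\ell=n$ with $B_i=p_0^{-1}\{k_{i-1},\dots,k_i-1\}=p_1^{-1}\{k_{i-1},\dots,k_i-1\}$ and $p_0(b)+p_1(b)=k_{i-1}+k_i-1$ for $b\in B_i$; the $B_i$ are blocks ($k$-block: $k$ letters). Chains: with the $1$-blocks $S_1,\dots,S_{k-1}$ listed left to right, chain $C_i$ is the possibly empty sequence of consecutive blocks strictly between $S_{i-1}$ and $S_i$ ($C_1$ before $S_1$, $C_k$ after $S_{k-1}$). Only piece-wise order reversing pairs have a Type. Types: $\langle1\rangle$: at most one nonempty chain, consisting (if present) of one block. Types $\langle2\rangle$–$\langle5\rangle$ require more than one block of size $\ge2$, and: $\langle2\rangle$: all nonempty chains consist of $2$-blocks; $\langle3\rangle$: each nonempty chain is (i) $m$ $2$-blocks, a $3$-block, $\ell$ $2$-blocks ($m,\ell\ge0$) or (ii) $m\ge1$ $2$-blocks, with at least one chain of form (i); $\langle4\rangle$: exactly one chain is a $4$-block followed by $m\ge0$ $2$-blocks, other nonempty chains consist of $2$-blocks; $\langle5\rangle$: exactly one chain is a single $5$-block, every other nonempty chain is exactly one $2$-block. *)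

(* Defs.v *)
From mathcomp Require Import all_boot.
Set Implicit Arguments. Unset Strict Implicit. Unset Printing Implicit Defensive.

(* A pair p = (p0,p1) on the finite alphabet A is represented by its two
   rows: row e lists p_e^{-1}(1), ..., p_e^{-1}(n).  So p_e(b) = index b row_e + 1. *)
Definition pair (A : finType) := (seq A * seq A)%type.

Definition is_pair (A : finType) (p : pair A) : Prop :=
  perm_eq p.1 (enum A) /\ perm_eq p.2 (enum A).

Definition pos (A : finType) (r : seq A) (b : A) : nat := (index b r).+1.

Definition standard (A : finType) (p : pair A) : Prop :=
  is_pair p /\
  exists (a z : A) (u v : seq A), p.1 = a :: rcons u z /\ p.2 = z :: rcons v a.

Definition inner_switch (A : finType) (p q : pair A) : Prop :=
  standard p /\
  exists (a z b c : A) (u1 u2 u3 u4 u5 u6 : seq A),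
    p = (a :: u1 ++ b :: u2 ++ c :: u3 ++ [:: z],
         z :: u4 ++ b :: u5 ++ c :: u6 ++ [:: a]) /\
    q = (a :: u2 ++ c :: u1 ++ b :: u3 ++ [:: z],
         z :: u5 ++ c :: u4 ++ b :: u6 ++ [:: a]).

Definition outer_switch_ab (A : finType) (p q : pair A) : Prop :=
  standard p /\
  exists (a z b : A) (u1 u2 u3 u4 : seq A),
    p = (a :: u1 ++ b :: u2 ++ [:: z], z :: u3 ++ b :: u4 ++ [:: a]) /\
    q = (b :: u2 ++ a :: u1 ++ [:: z], z :: u4 ++ a :: u3 ++ [:: b]).

Definition outer_switch_bz (A : finType) (p q : pair A) : Prop :=
  standard p /\
  exists (a z b : A) (u1 u2 u3 u4 : seq A),
    p = (a :: u1 ++ b :: u2 ++ [:: z], z :: u3 ++ b :: u4 ++ [:: a]) /\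
    q = (a :: u2 ++ z :: u1 ++ [:: b], b :: u4 ++ z :: u3 ++ [:: a]).

(* The set Sigma: rows  a w0 w1 ... wd w_{d+1} z  and  z w0 wd ... w1 w_{d+1} a,
   with w1..wd nonempty (ws = [:: w1; ...; wd], d = size ws >= 0). *)
Definition in_Sigma (A : finType) (p : pair A) : Prop :=
  standard p /\
  exists (a z : A) (w0 wl : seq A) (ws : seq (seq A)),
    all (fun w => w != [::]) ws /\
    p.1 = a :: w0 ++ flatten ws ++ wl ++ [:: z] /\
    p.2 = z :: w0 ++ flatten (rev ws) ++ wl ++ [:: a].

(* Piece-wise order reversing, with block boundaries k = [:: k_0; ...; k_l],
   2 = k_0 < ... < k_l = n.  Block B_i = p_e^{-1}{k_{i-1},...,k_i - 1}. *)
Definition por_decomp (A : finType) (p : pair A) (k : seq nat) : Prop :=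
  standard p /\
  size k > 0 /\ head 0 k = 2 /\ last 0 k = #|A| /\ sorted ltn k /\
  forall i, 0 < i < size k -> forall b : A,
    let lo := nth 0 k i.-1 in let hi := nth 0 k i in
    ((lo <= pos p.1 b < hi) = (lo <= pos p.2 b < hi)) /\
    (lo <= pos p.1 b < hi -> pos p.1 b + pos p.2 b = lo + hi - 1).

Definition piecewise_order_reversing (A : finType) (p : pair A) : Prop :=
  exists k, por_decomp p k.

Definition block_sizes (k : seq nat) : seq nat :=
  [seq nth 0 k i.+1 - nth 0 k i | i <- iota 0 (size k).-1].

(* chains C_1, ..., C_k: maximal (possibly empty) runs of blocks between
   consecutive 1-blocks (C_1 before S_1, C_k after S_{k-1}); represented by
   the sizes of their blocks *)
Definition chains (s : seq nat) : seq (seq nat) :=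
  foldr (fun x acc => if x == 1 then [::] :: acc
                      else (x :: head [::] acc) :: behead acc) [:: [::]] s.

Definition many_big (s : seq nat) : bool := 1 < count (fun x => 2 <= x) s.

Definition all2blocks (c : seq nat) : bool := all (fun x => x == 2) c.

Definition formI (c : seq nat) : bool :=
  [exists m : 'I_(size c).+1, exists l : 'I_(size c).+1,
     c == nseq m 2 ++ 3 :: nseq l 2].
Definition formII (c : seq nat) : bool := (c != [::]) && all2blocks c.
Definition form4 (c : seq nat) : bool :=
  [exists m : 'I_(size c).+1, c == 4 :: nseq m 2].

Definition type1 (s : seq nat) : bool :=
  (count (fun c => c != [::]) (chains s) <= 1) &&
  all (fun c => size c <= 1) (chains s).

Definition type2 (s : seq nat) : bool :=
  many_big s && all (fun c => (c == [::]) || all2blocks c) (chains s).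

Definition type3 (s : seq nat) : bool :=
  [&& many_big s,
      all (fun c => [|| c == [::], formI c | formII c]) (chains s)
    & has formI (chains s)].

Definition type4 (s : seq nat) : bool :=
  [&& many_big s, count form4 (chains s) == 1
    & all (fun c => form4 c || all2blocks c) (chains s)].

Definition type5 (s : seq nat) : bool :=
  [&& many_big s, count (fun c => c == [:: 5]) (chains s) == 1
    & all (fun c => [|| c == [:: 5], c == [::] | c == [:: 2]]) (chains s)].

Definition is_type (t : nat) (s : seq nat) : bool :=
  match t with
  | 1 => type1 s | 2 => type2 s | 3 => type3 s | 4 => type4 s | 5 => type5 s
  | _ => false
  end.

Definition has_type (A : finType) (p : pair A) (t : nat) : Prop :=
  exists k, por_decomp p k /\ is_type t (block_sizes k).

(* Main.v *)
Require Import Defs.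
From mathcomp Require Import all_boot.
From mathcomp Require Import zify.
Set Implicit Arguments. Unset Strict Implicit. Unset Printing Implicit Defensive.

Lemma catb_eq (T : Type) (s1 s2 t1 t2 : seq T) (b : T) :
  s1 ++ b :: s2 = t1 ++ t2 ->
  (exists m, t1 = s1 ++ b :: m /\ s2 = m ++ t2) \/
  (exists m, s1 = t1 ++ m /\ t2 = m ++ b :: s2).
Proof.
elim: s1 t1 => [|x s1 IH] [|y t1] /=.
- by move=> <-; right; exists [::].
- by case=> -> ->; left; exists t1.
- by move=> <-; right; exists (x :: s1).
- case=> -> /IH [[m [-> ->]]|[m [-> ->]]]; [left|right]; by exists m.
Qed.

Lemma idx_split (T : eqType) (s1 s2 : seq T) b :
  b \notin s1 -> index b (s1 ++ b :: s2) = size s1.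
Proof. by move=> h; rewrite index_cat (negbTE h) /= eqxx addn0. Qed.

Lemma notin_uniq (T : eqType) (s1 s2 : seq T) b :
  uniq (s1 ++ b :: s2) -> b \notin s1.
Proof.
rewrite cat_uniq => /and3P [_ h _]; apply/negP => hb; move: h.
by rewrite /= hb.
Qed.

Lemma uniq_two (T : eqType) (s1 s2 : seq T) x :
  uniq (s1 ++ s2) -> x \in s1 -> x \in s2 -> False.
Proof.
rewrite cat_uniq => /and3P [_ h _] h1 h2; move/negP: h; apply.
by apply/hasP; exists x.
Qed.

Lemma uniq_split (T : eqType) (L s1 s2 t1 t2 : seq T) b :
  uniq L -> L = s1 ++ b :: s2 -> L = t1 ++ b :: t2 -> s1 = t1 /\ s2 = t2.
Proof.
move=> U E1 E2.
have h1 : b \notin s1 by move: U; rewrite E1 => /notin_uniq.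
have h2 : b \notin t1 by move: U; rewrite E2 => /notin_uniq.
have hs : size s1 = size t1.
  by rewrite -(idx_split s2 h1) -(idx_split t2 h2) -E1 -E2.
have E : s1 ++ b :: s2 = t1 ++ b :: t2 by rewrite -E1 -E2.
split.
- by have := congr1 (take (size s1)) E; rewrite take_size_cat // hs take_size_cat.
- have := congr1 (drop (size s1)) E; rewrite drop_size_cat // hs drop_size_cat //.
  by case.
Qed.

Lemma uniq_split2 (T : eqType) (L s1 s2 s3 t1 t2 t3 : seq T) b c :
  uniq L -> L = s1 ++ b :: s2 ++ c :: s3 -> L = t1 ++ b :: t2 ++ c :: t3 ->
  [/\ s1 = t1, s2 = t2 & s3 = t3].
Proof.
move=> U E1 E2; have [e1 e2] := uniq_split U E1 E2.
have U' : uniq (s2 ++ c :: s3).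
  by move: U; rewrite E1 cat_uniq => /and3P [_ _ /andP [_ h]].
have [e3 e4] := uniq_split U' (erefl _) e2.
by split.
Qed.

Lemma flatten_split (T : Type) (ws : seq (seq T)) m1 m2 b :
  flatten ws = m1 ++ b :: m2 ->
  exists ws1 al be ws2, [/\ ws = ws1 ++ (al ++ b :: be) :: ws2,
    m1 = flatten ws1 ++ al & m2 = be ++ flatten ws2].
Proof.
elim: ws m1 => [|w ws IH] m1 /=; first by case: m1.
move=> /esym E; case: (catb_eq E) => [[m [-> ->]]|[m [-> /IH]]].
- by exists [::], m1, m, ws.
- move=> [ws1 [al [be [ws2 [-> -> ->]]]]].
  by exists (w :: ws1), al, be, ws2; rewrite /= catA.
Qed.

Lemma flat_rev3 (T : Type) (ws1 ws2 : seq (seq T)) w :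
  flatten (rev (ws1 ++ w :: ws2)) = flatten (rev ws2) ++ w ++ flatten (rev ws1).
Proof. by rewrite rev_cat rev_cons -cats1 !flatten_cat /= cats0 catA. Qed.

Lemma size_flat_rev (T : Type) (ws : seq (seq T)) :
  size (flatten (rev ws)) = size (flatten ws).
Proof.
elim: ws => //= w ws IH.
by rewrite rev_cons -cats1 flatten_cat size_cat /= cats0 size_cat IH addnC.
Qed.

Ltac norm := rewrite ?flatten_cat ?flat_rev3 /=;
  repeat (rewrite -catA || rewrite cat_cons || rewrite cat0s || rewrite cats0).

Definition MS (A : finType) (X Y : seq A) : Prop :=
  exists w0 wl (ws : seq (seq A)), [/\ all (fun w => w != [::]) ws,
    X = w0 ++ flatten ws ++ wl & Y = w0 ++ flatten (rev ws) ++ wl].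

Lemma MS_outer (A : finType) (X Y : seq A) u1 u2 u3 u4 b e :
  uniq Y -> MS X Y -> X = u1 ++ b :: u2 -> Y = u3 ++ b :: u4 ->
  MS (u2 ++ e :: u1) (u4 ++ e :: u3).
Proof.
move=> UY [w0 [wl [ws [Hall -> EY]]]] EX EY'.
move: EY' UY; rewrite EY => {}EY UY.
case: (catb_eq (esym EX)) => [[m [E0 E2]]|[m [E1 E2]]].
- subst w0 u2.
  have EE : (u1 ++ b :: m) ++ flatten (rev ws) ++ wl =
            u1 ++ b :: (m ++ flatten (rev ws) ++ wl) by norm.
  have [e1 e2] := uniq_split UY EE EY.
  rewrite -e1 -e2; exists m, (wl ++ e :: u1), ws; split => //; by norm.
- subst u1; case: (catb_eq (esym E2)) => [[m' [E3 E4]]|[m' [E3 E4]]].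
  + have [ws1 [al [be [ws2 [Ew Em Em']]]]] := flatten_split E3.
    subst.
    have EE : w0 ++ flatten (rev (ws1 ++ (al ++ b :: be) :: ws2)) ++ wl =
      (w0 ++ flatten (rev ws2) ++ al) ++ b :: (be ++ flatten (rev ws1) ++ wl)
      by norm.
    have [e1 e2] := uniq_split UY EE EY.
    rewrite -e1 -e2; exists be, al, (ws2 ++ (wl ++ e :: w0) :: ws1); split.
    * move: Hall; rewrite !all_cat /= => /andP [h1 /andP [_ h2]].
      by rewrite h1 h2 andbT; case: (wl).
    * by norm.
    * by norm.
  + subst m wl.
    have EE : w0 ++ flatten (rev ws) ++ m' ++ b :: u2 =
      (w0 ++ flatten (rev ws) ++ m') ++ b :: u2 by norm.
    have [e1 e2] := uniq_split UY EE EY.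
    rewrite -e1 -e2; exists (u2 ++ e :: w0), m', ws; split => //; by norm.
Qed.

Lemma ne_cat (T : eqType) (x z : seq T) y : x ++ y :: z != [::].
Proof. by case: x. Qed.

Lemma all_swap1 (T : eqType) (ws1 ws2 : seq (seq T)) w w' :
  all (fun w => w != [::]) (ws1 ++ w :: ws2) -> w' != [::] ->
  all (fun w => w != [::]) (ws1 ++ w' :: ws2).
Proof. by rewrite !all_cat /= => /andP [-> /andP [_ ->]] ->. Qed.

Lemma all_swap2 (T : eqType) (ws1 ws2 : seq (seq T)) w w' :
  all (fun w => w != [::]) (ws1 ++ w :: ws2) -> w' != [::] ->
  all (fun w => w != [::]) (ws2 ++ w' :: ws1).
Proof. by rewrite !all_cat /= => /andP [-> /andP [_ ->]] ->. Qed.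

Lemma MS_inner (A : finType) (X Y : seq A) u1 u2 u3 u4 u5 u6 b c :
  uniq Y -> MS X Y -> X = u1 ++ b :: u2 ++ c :: u3 ->
  Y = u4 ++ b :: u5 ++ c :: u6 ->
  MS (u2 ++ c :: u1 ++ b :: u3) (u5 ++ c :: u4 ++ b :: u6).
Proof.
move=> UY [w0 [wl [ws [Hall -> EY]]]] EX EY'.
move: EY' UY; rewrite EY => {}EY UY.
case: (catb_eq (esym EX)) => [[m [E0 E2]]|[m [E1 E2]]].
- subst w0; case: (catb_eq E2) => [[m' [E3 E4]]|[m' [E3 E4]]].
  + subst m u3.
    have EE : (u1 ++ b :: u2 ++ c :: m') ++ flatten (rev ws) ++ wl =
      u1 ++ b :: u2 ++ c :: (m' ++ flatten (rev ws) ++ wl) by norm.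
    have [e1 e2 e3] := uniq_split2 UY EE EY; rewrite -e1 -e2 -e3.
    exists (u2 ++ c :: u1 ++ b :: m'), wl, ws; split => //; by norm.
  + subst u2; case: (catb_eq (esym E4)) => [[n [E5 E6]]|[n [E5 E6]]].
    * have [ws1 [al [be [ws2 [Ew Em Em']]]]] := flatten_split E5.
      subst.
      have EE : (u1 ++ b :: m) ++ flatten (rev (ws1 ++ (al ++ c :: be) :: ws2)) ++ wl
        = u1 ++ b :: (m ++ flatten (rev ws2) ++ al) ++ c ::
          (be ++ flatten (rev ws1) ++ wl) by norm.
      have [e1 e2 e3] := uniq_split2 UY EE EY; rewrite -e1 -e2 -e3.
      exists m, wl, (ws1 ++ (al ++ c :: u1 ++ b :: be) :: ws2); split.
      -- exact: all_swap1 Hall (ne_cat _ _ _).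
      -- by norm.
      -- by norm.
    * subst.
      have EE : (u1 ++ b :: m) ++ flatten (rev ws) ++ n ++ c :: u3
        = u1 ++ b :: (m ++ flatten (rev ws) ++ n) ++ c :: u3 by norm.
      have [e1 e2 e3] := uniq_split2 UY EE EY; rewrite -e1 -e2 -e3.
      exists m, (n ++ c :: u1 ++ b :: u3), ws; split => //; by norm.
- subst u1; case: (catb_eq (esym E2)) => [[m' [E3 E4]]|[m' [E3 E4]]].
  + have [ws1 [al [be [ws2 [Ew Em Em']]]]] := flatten_split E3.
    subst ws m m'; rewrite -catA in E4.
    case: (catb_eq E4) => [[n [E5 E6]]|[n [E5 E6]]].
    * subst.
      have EE : w0 ++ flatten (rev (ws1 ++ (al ++ b :: u2 ++ c :: n) :: ws2)) ++ wl
        = (w0 ++ flatten (rev ws2) ++ al) ++ b :: u2 ++ c ::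
          (n ++ flatten (rev ws1) ++ wl) by norm.
      have [e1 e2 e3] := uniq_split2 UY EE EY; rewrite -e1 -e2 -e3.
      exists (u2 ++ c :: w0), wl, (ws1 ++ (al ++ b :: n) :: ws2); split.
      -- exact: all_swap1 Hall (ne_cat _ _ _).
      -- by norm.
      -- by norm.
    * subst u2; case: (catb_eq (esym E6)) => [[n' [E7 E8]]|[n' [E7 E8]]].
      -- have [vs1 [ga [de [vs2 [Ew Em Em']]]]] := flatten_split E7.
         subst.
         have EE : w0 ++ flatten (rev (ws1 ++ (al ++ b :: be) ::
                     (vs1 ++ (ga ++ c :: de) :: vs2))) ++ wl =
           (w0 ++ flatten (rev vs2) ++ ga) ++ c :: (de ++ flatten (rev vs1) ++
             (al ++ b :: be) ++ flatten (rev ws1) ++ wl) by norm.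
         have EY2 : w0 ++ flatten (rev (ws1 ++ (al ++ b :: be) ::
                     (vs1 ++ (ga ++ c :: de) :: vs2))) ++ wl =
                    (u4 ++ b :: u5) ++ c :: u6 by rewrite EY -catA.
         have [e1 e2] := uniq_split UY EE EY2.
         move: UY; rewrite EE => UY.
         exfalso; apply: (uniq_two (x := b) UY).
         ++ by rewrite e1 mem_cat in_cons eqxx orbT.
         ++ by rewrite in_cons !mem_cat in_cons eqxx !orbT.
      -- subst.
         have EE : w0 ++ flatten (rev (ws1 ++ (al ++ b :: be) :: ws2)) ++ n' ++ c :: u3
           = (w0 ++ flatten (rev ws2) ++ al) ++ b ::
             (be ++ flatten (rev ws1) ++ n') ++ c :: u3 by norm.
         have [e1 e2 e3] := uniq_split2 UY EE EY; rewrite -e1 -e2 -e3.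
         exists be, (al ++ b :: u3), (ws2 ++ (n' ++ c :: w0) :: ws1); split.
         ++ exact: all_swap2 Hall (ne_cat _ _ _).
         ++ by norm.
         ++ by norm.
  + subst.
    have EE : w0 ++ flatten (rev ws) ++ m' ++ b :: u2 ++ c :: u3
      = (w0 ++ flatten (rev ws) ++ m') ++ b :: u2 ++ c :: u3 by norm.
    have [e1 e2 e3] := uniq_split2 UY EE EY; rewrite -e1 -e2 -e3.
    exists (u2 ++ c :: w0), (m' ++ b :: u3), ws; split => //; by norm.
Qed.
Lemma Sigma_mid (A : finType) (p : pair A) a z X Y :
  p = (a :: X ++ [:: z], z :: Y ++ [:: a]) -> in_Sigma p -> MS X Y.
Proof.
move=> -> [_ [a' [z' [w0 [wl [ws [Hall [/= E1 /= E2]]]]]]]].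
case: E1 => _; rewrite !catA !cats1 => /rcons_inj [E1 _].
case: E2 => _; rewrite !catA !cats1 => /rcons_inj [E2 _].
exists w0, wl, ws; split => //; [rewrite E1 | rewrite E2]; by norm.
Qed.

Lemma std_uniq (A : finType) (p : pair A) a z X Y :
  p = (a :: X ++ [:: z], z :: Y ++ [:: a]) -> standard p -> uniq X /\ uniq Y.
Proof.
move=> E [[P1 P2] _].
have U1 : uniq p.1 by rewrite (perm_uniq P1) enum_uniq.
have U2 : uniq p.2 by rewrite (perm_uniq P2) enum_uniq.
move: U1 U2; rewrite E /= !cat_uniq => /andP [_ /and3P [h1 _ _]] /andP [_ /and3P [h2 _ _]].
by [].
Qed.

Lemma closure_gen (A : finType) (p q : pair A) a z a' z' X Y X' Y' :
  standard p -> in_Sigma p ->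
  p = (a :: X ++ [:: z], z :: Y ++ [:: a]) ->
  q = (a' :: X' ++ [:: z'], z' :: Y' ++ [:: a']) ->
  perm_eq q.1 p.1 -> perm_eq q.2 p.2 ->
  (uniq Y -> MS X Y -> MS X' Y') -> in_Sigma q.
Proof.
move=> Hst HS Ep Eq P1 P2 H.
have [_ UY] := std_uniq Ep Hst.
have [w0 [wl [ws [Hall EX EY]]]] := H UY (Sigma_mid Ep HS).
case: Hst => [[Q1 Q2] _].
split.
- split; first by split; [exact: perm_trans P1 Q1 | exact: perm_trans P2 Q2].
  exists a', z', X', Y'; rewrite Eq /=; by rewrite !cats1.
- exists a', z', w0, wl, ws; split => //; rewrite Eq /= ?EX ?EY; by norm.
Qed.

Theorem lemma4p8_part123 (A : finType) :
  (forall p q : pair A, in_Sigma p -> inner_switch p q -> in_Sigma q) /\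
  (forall p q : pair A, in_Sigma p -> outer_switch_ab p q -> in_Sigma q) /\
  (forall p q : pair A, in_Sigma p -> outer_switch_bz p q -> in_Sigma q).
Proof.
split; [|split].
- move=> p q HS [Hst [a [z [b [c [u1 [u2 [u3 [u4 [u5 [u6 [Ep Eq]]]]]]]]]]]].
  apply: (closure_gen (a := a) (z := z) (a' := a) (z' := z)
    (X := u1 ++ b :: u2 ++ c :: u3) (Y := u4 ++ b :: u5 ++ c :: u6)
    (X' := u2 ++ c :: u1 ++ b :: u3) (Y' := u5 ++ c :: u4 ++ b :: u6) Hst HS).
  + by rewrite Ep; norm.
  + by rewrite Eq; norm.
  + by rewrite Eq Ep; apply/permP => P /=; repeat (rewrite count_cat /=); lia.
  + by rewrite Eq Ep; apply/permP => P /=; repeat (rewrite count_cat /=); lia.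
  + by move=> UY HM; apply: MS_inner UY HM _ _.
- move=> p q HS [Hst [a [z [b [u1 [u2 [u3 [u4 [Ep Eq]]]]]]]]].
  apply: (closure_gen (a := a) (z := z) (a' := b) (z' := z)
    (X := u1 ++ b :: u2) (Y := u3 ++ b :: u4)
    (X' := u2 ++ a :: u1) (Y' := u4 ++ a :: u3) Hst HS).
  + by rewrite Ep; norm.
  + by rewrite Eq; norm.
  + by rewrite Eq Ep; apply/permP => P /=; repeat (rewrite count_cat /=); lia.
  + by rewrite Eq Ep; apply/permP => P /=; repeat (rewrite count_cat /=); lia.
  + by move=> UY HM; apply: MS_outer UY HM _ _.
- move=> p q HS [Hst [a [z [b [u1 [u2 [u3 [u4 [Ep Eq]]]]]]]]].
  apply: (closure_gen (a := a) (z := z) (a' := a) (z' := b)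
    (X := u1 ++ b :: u2) (Y := u3 ++ b :: u4)
    (X' := u2 ++ z :: u1) (Y' := u4 ++ z :: u3) Hst HS).
  + by rewrite Ep; norm.
  + by rewrite Eq; norm.
  + by rewrite Eq Ep; apply/permP => P /=; repeat (rewrite count_cat /=); lia.
  + by rewrite Eq Ep; apply/permP => P /=; repeat (rewrite count_cat /=); lia.
  + by move=> UY HM; apply: MS_outer UY HM _ _.
Qed.

Lemma chains_cons x s : chains (x :: s) = if x == 1 then [::] :: chains s
  else (x :: head [::] (chains s)) :: behead (chains s).
Proof. by []. Qed.

Lemma chains_all1 s : count (predC1 1) s = 0 -> chains s = nseq (size s).+1 [::].
Proof.
elim: s => [//|y s IH]; rewrite chains_cons /=.
case: (eqVneq y 1) => [hy|hy] /= h; first subst y.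
- by rewrite IH.
- exfalso; lia.
Qed.

Lemma type1_count s : count (predC1 1) s <= 1 -> type1 s.
Proof.
elim: s => [//|x s IH]; rewrite /type1 chains_cons /=.
case: (eqVneq x 1) => [hx|hx] /=; first subst x.
- rewrite add0n => /IH; rewrite /type1 => /andP [h1 h2].
  by rewrite add0n h1 h2.
- move=> h; have h0 : count (predC1 1) s = 0 by move: h; rewrite add1n ltnS leqn0 => /eqP.
  rewrite chains_all1 //= count_nseq all_nseq /=.
  by rewrite orbT.
Qed.

Lemma count1_iota (P : pred nat) m : 0 < count P (iota 0 m) ->
  exists i, i < m /\ P i.
Proof.
rewrite -has_count => /hasP [i]; rewrite mem_iota add0n => /andP [_ hi] hP.
by exists i.
Qed.

Lemma count2_iota (P : pred nat) m : 1 < count P (iota 0 m) ->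
  exists i j, [/\ i < j < m, P i & P j].
Proof.
elim: m => [//|m IH]; rewrite -[m.+1]addn1 iotaD count_cat /= add0n addn0.
case hm: (P m) => /=.
- rewrite addn1 ltnS => /count1_iota [i [hi hP]].
  by exists i, m; rewrite hi addn1 ltnSn.
- rewrite addn0 => /IH [i [j [/andP [hij hj] hi hjP]]].
  by exists i, j; rewrite hij addn1 ltnS ltnW.
Qed.

Lemma mem_split (T : eqType) (s : seq T) x : x \in s -> exists s1 s2, s = s1 ++ x :: s2.
Proof. by case/splitPr => s1 s2; exists s1, s2. Qed.

Lemma loc (A : finType) w0 wl (ws : seq (seq A)) b :
  b \in w0 ++ flatten ws ++ wl ->
  [\/ exists l1 l2, w0 = l1 ++ b :: l2,
      exists ws1 al be ws2, ws = ws1 ++ (al ++ b :: be) :: ws2 |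
      exists l1 l2, wl = l1 ++ b :: l2].
Proof.
rewrite !mem_cat => /orP [/mem_split h|/orP [/mem_split [s1 [s2 E]]|/mem_split h]].
- by constructor 1.
- have [ws1 [al [be [ws2 [E' _ _]]]]] := flatten_split E.
  by constructor 2; exists ws1, al, be, ws2.
- by constructor 3.
Qed.

Lemma idx_fixed (A : finType) w0 wl (ws : seq (seq A)) b :
  uniq (w0 ++ flatten ws ++ wl) -> uniq (w0 ++ flatten (rev ws) ++ wl) ->
  (exists l1 l2, w0 = l1 ++ b :: l2) \/ (exists l1 l2, wl = l1 ++ b :: l2) ->
  index b (w0 ++ flatten ws ++ wl) = index b (w0 ++ flatten (rev ws) ++ wl).
Proof.
move=> UX UY [[l1 [l2 E]]|[l1 [l2 E]]]; subst.
- have E1 : (l1 ++ b :: l2) ++ flatten ws ++ wl = l1 ++ b :: (l2 ++ flatten ws ++ wl)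
    by norm.
  have E2 : (l1 ++ b :: l2) ++ flatten (rev ws) ++ wl =
    l1 ++ b :: (l2 ++ flatten (rev ws) ++ wl) by norm.
  rewrite E1 in UX *; rewrite E2 in UY *.
  by rewrite !idx_split ?(notin_uniq UX) ?(notin_uniq UY).
- have E1 : w0 ++ flatten ws ++ l1 ++ b :: l2 = (w0 ++ flatten ws ++ l1) ++ b :: l2
    by norm.
  have E2 : w0 ++ flatten (rev ws) ++ l1 ++ b :: l2 =
    (w0 ++ flatten (rev ws) ++ l1) ++ b :: l2 by norm.
  rewrite E1 in UX *; rewrite E2 in UY *.
  by rewrite !idx_split ?(notin_uniq UX) ?(notin_uniq UY) // !size_cat size_flat_rev.
Qed.

Lemma idx_word (A : finType) w0 wl (ws ws1 ws2 : seq (seq A)) al be b :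
  uniq (w0 ++ flatten ws ++ wl) -> uniq (w0 ++ flatten (rev ws) ++ wl) ->
  ws = ws1 ++ (al ++ b :: be) :: ws2 ->
  index b (w0 ++ flatten ws ++ wl) = size w0 + size (flatten ws1) + size al /\
  index b (w0 ++ flatten (rev ws) ++ wl) = size w0 + size (flatten ws2) + size al.
Proof.
move=> UX UY E; subst.
have E1 : w0 ++ flatten (ws1 ++ (al ++ b :: be) :: ws2) ++ wl =
  (w0 ++ flatten ws1 ++ al) ++ b :: (be ++ flatten ws2 ++ wl) by norm.
have E2 : w0 ++ flatten (rev (ws1 ++ (al ++ b :: be) :: ws2)) ++ wl =
  (w0 ++ flatten (rev ws2) ++ al) ++ b :: (be ++ flatten (rev ws1) ++ wl) by norm.
rewrite E1 in UX *; rewrite E2 in UY *.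
rewrite !idx_split ?(notin_uniq UX) ?(notin_uniq UY) // !size_cat size_flat_rev.
by rewrite !addnA.
Qed.

Lemma mid_movers (A : finType) w0 wl (ws : seq (seq A)) b c :
  uniq (w0 ++ flatten ws ++ wl) -> uniq (w0 ++ flatten (rev ws) ++ wl) ->
  b \in w0 ++ flatten ws ++ wl -> c \in w0 ++ flatten ws ++ wl ->
  index b (w0 ++ flatten ws ++ wl) < index b (w0 ++ flatten (rev ws) ++ wl) ->
  index c (w0 ++ flatten (rev ws) ++ wl) < index c (w0 ++ flatten ws ++ wl) ->
  index b (w0 ++ flatten ws ++ wl) < index c (w0 ++ flatten ws ++ wl) ->
  index b (w0 ++ flatten (rev ws) ++ wl) < index c (w0 ++ flatten (rev ws) ++ wl) ->
  False.
Proof.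
move=> UX UY hb hc h1 h2 h3 h4.
case: (loc hb) => [Hb|[ws1 [al [be [ws2 Eb]]]]|Hb].
  by rewrite (idx_fixed UX UY (or_introl Hb)) ltnn in h1.
  2: by rewrite (idx_fixed UX UY (or_intror Hb)) ltnn in h1.
case: (loc hc) => [Hc|[vs1 [ga [de [vs2 Ec]]]]|Hc].
  by rewrite (idx_fixed UX UY (or_introl Hc)) ltnn in h2.
  2: by rewrite (idx_fixed UX UY (or_intror Hc)) ltnn in h2.
have [eb1 eb2] := idx_word UX UY Eb.
have [ec1 ec2] := idx_word UX UY Ec.
rewrite eb1 eb2 ec1 ec2 in h1 h2 h3 h4.
move: Ec; rewrite Eb => Ec.
case: (catb_eq Ec) => [[m [E1 E2]]|[m [E1 E2]]].
- subst vs1 ws2; move: h4; rewrite !flatten_cat /= !size_cat /=; lia.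
- case: m E1 E2 => [|y m'] E1 E2.
  + case: E2 => _ E2; subst; rewrite cats0 in h1; lia.
  + case: E2 => E3 E2; subst; move: h3; rewrite !flatten_cat /= !size_cat /=; lia.
Qed.

Lemma pos_first (A : finType) (x : A) s : pos (x :: s) x = 1.
Proof. by rewrite /pos /= eqxx. Qed.

Lemma pos_mid (A : finType) (a z x : A) X :
  2 <= pos (a :: X ++ [:: z]) x -> x != z -> x \in a :: X ++ [:: z] ->
  x \in X /\ pos (a :: X ++ [:: z]) x = (index x X).+2.
Proof.
rewrite /pos /=; case: (eqVneq a x) => [//|ax] _ xz.
rewrite in_cons eq_sym (negbTE ax) /= mem_cat in_cons (negbTE xz) orbF => hX.
by rewrite index_cat hX.
Qed.

Lemma sigma_movers (A : finType) (p : pair A) b c : in_Sigma p ->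
  2 <= pos p.1 b -> 2 <= pos p.2 b -> 2 <= pos p.1 c -> 2 <= pos p.2 c ->
  pos p.1 b < pos p.2 b -> pos p.2 c < pos p.1 c ->
  pos p.1 b < pos p.1 c -> pos p.2 b < pos p.2 c -> False.
Proof.
move=> HS; have HS' := HS.
case: HS' => [Hst [a [z [w0 [wl [ws [Hall [E1 E2]]]]]]]].
have Ep : p = (a :: (w0 ++ flatten ws ++ wl) ++ [:: z],
               z :: (w0 ++ flatten (rev ws) ++ wl) ++ [:: a]).
  by case: p E1 E2 {HS Hst} => p1 p2 /= -> ->; norm.
have [UX UY] := std_uniq Ep Hst.
case: Hst => [[P1 P2] _].
have m1 : forall x, x \in p.1 by move=> x; rewrite (perm_mem P1) mem_enum.
have m2 : forall x, x \in p.2 by move=> x; rewrite (perm_mem P2) mem_enum.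
set X := w0 ++ flatten ws ++ wl in Ep UX; set Y := w0 ++ flatten (rev ws) ++ wl in Ep UY.
have T1 : forall x, 2 <= pos p.1 x -> 2 <= pos p.2 x ->
    [/\ x \in X, pos p.1 x = (index x X).+2 & pos p.2 x = (index x Y).+2].
  move=> x; move: (m1 x) (m2 x); rewrite Ep /= => hm1 hm2 h1 h2.
  have xz : x != z by apply/eqP => E; move: h2; rewrite E pos_first.
  have xa : x != a by apply/eqP => E; move: h1; rewrite E pos_first.
  have [hX e1] := pos_mid h1 xz hm1.
  have [_ e2] := pos_mid h2 xa hm2.
  by split.
move=> hb1 hb2 hc1 hc2 h1 h2 h3 h4.
have [bX eb1 eb2] := T1 b hb1 hb2.
have [cX ec1 ec2] := T1 c hc1 hc2.
rewrite eb1 eb2 ec1 ec2 !ltnS in h1 h2 h3 h4.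
exact: (mid_movers UX UY bX cX h1 h2 h3 h4).
Qed.

Lemma por_count (A : finType) (p : pair A) k :
  in_Sigma p -> por_decomp p k -> count (predC1 1) (block_sizes k) <= 1.
Proof.
move=> HS [Hst [hk0 [hhead [hlast [hsort H]]]]].
rewrite leqNgt; apply/negP; rewrite /block_sizes count_map.
move=> /count2_iota [i [j [/andP [hij hj] hPi hPj]]].
move: hPi hPj; rewrite /= => hPi hPj.
have mono : forall x y, x < y -> y < size k -> nth 0 k x < nth 0 k y.
  move=> x y hxy hy; apply: (sorted_ltn_nth ltn_trans 0 hsort) => //; rewrite inE.
  exact: ltn_trans hxy hy.
have ge2 : forall x, x < size k -> 2 <= nth 0 k x.
  move=> x hx; case: x hx => [|x] hx; first by rewrite nth0 hhead.
  by have := mono 0 x.+1 (ltn0Sn x) hx; rewrite nth0 hhead; lia.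
have len : forall x, x < size k -> nth 0 k x <= #|A|.
  move=> x hx; rewrite -hlast -nth_last.
  case: (ltnP x (size k).-1) => h.
    by apply/ltnW/mono => //; lia.
  by have -> : x = (size k).-1 by lia.
have hii : nth 0 k i.+1 <= nth 0 k j.
  case: (ltnP i.+1 j) => h.
    by apply/ltnW/mono => //; lia.
  by have -> : j = i.+1 by lia.
have s1 : i.+1 < size k by lia.
have s2 : j.+1 < size k by lia.
have s3 : i < size k by lia.
have s4 : j < size k by lia.
have mi := mono i i.+1 (ltnSn i) s1.
have mj := mono j j.+1 (ltnSn j) s2.
have gi := ge2 i s3.
have gj := ge2 j s4.
have lj := len j.+1 s2.
have sz1 : size p.1 = #|A| by case: Hst => [[P1 _] _]; rewrite (perm_size P1) cardE.
have U1 : uniq p.1 by case: Hst => [[P1 _] _]; rewrite (perm_uniq P1) enum_uniq.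
case: (Hst) => _ [x0 _].
set b := nth x0 p.1 (nth 0 k i).-1.
set c := nth x0 p.1 (nth 0 k j.+1 - 2).
have pb : pos p.1 b = nth 0 k i.
  rewrite /pos /b index_uniq //; [lia | rewrite sz1; lia].
have pc : pos p.1 c = nth 0 k j.+1 - 1.
  rewrite /pos /c index_uniq //; [lia | rewrite sz1; lia].
have s5 : 0 < i.+1 < size k by rewrite s1.
have s6 : 0 < j.+1 < size k by rewrite s2.
have [Hb1 Hb2] := H i.+1 s5 b.
have [Hc1 Hc2] := H j.+1 s6 c.
rewrite /= in Hb1 Hb2 Hc1 Hc2.
have qb : nth 0 k i <= pos p.1 b < nth 0 k i.+1 by rewrite pb; apply/andP; split; lia.
have qc : nth 0 k j <= pos p.1 c < nth 0 k j.+1 by rewrite pc; apply/andP; split; lia.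
have := Hb2 qb; have := Hc2 qc.
rewrite qb in Hb1; rewrite qc in Hc1.
move/esym/andP: Hb1 => [rb1 rb2]; move/esym/andP: Hc1 => [rc1 rc2].
move=> sc sb.
apply: (sigma_movers (b := b) (c := c) HS); lia.
Qed.

Theorem lemma4p8 (A : finType) (hA : 1 < #|A|) :
  (forall p q : pair A, in_Sigma p -> inner_switch p q -> in_Sigma q) /\
  (forall p q : pair A, in_Sigma p -> outer_switch_ab p q -> in_Sigma q) /\
  (forall p q : pair A, in_Sigma p -> outer_switch_bz p q -> in_Sigma q) /\
  (forall p : pair A, in_Sigma p -> (exists t, has_type p t) -> has_type p 1).
Proof.
have [h1 [h2 h3]] := lemma4p8_part123 A.
split => //; split => //; split => //.
move=> p HS [t [k [Hk _]]]; exists k; split => //.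
exact: (type1_count (por_count HS Hk)).
Qed.
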